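(* Let $f\in C^1[0,1]$ with $f(0)=0$, $h:=f'$, and $q$ satisfying (q). For no $c<c^*$ does problem $(P_c)$ admit a solution.
   Context: Condition (q): $q\in C[0,1]$, $q>0$ on $(0,1)$, $q(0)=q(1)=0$, and $\limsup_{\varphi\to0^+}q(\varphi)/\varphi<+\infty$. For $c\in\mathbb R$, a solution of problem $(P_c)$ is a function $z\in C[0,1]\cap C^1(0,1)$ with $\dot z(\varphi)=h(\varphi)-c-q(\varphi)/z(\varphi)$ and $z(\varphi)<0$ for all $\varphi\in(0,1)$, and $z(0)=0$. A solution of $(P^{00}_c)$ is a solution of $(P_c)$ which also satisfies $z(1)=0$. $c^*$ denotes the real number such that $(P^{00}_c)$ has a solution iff $c\ge c^*$. *)

(* Defs.v *)
From Stdlib Require Import Reals.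
From Coquelicot Require Import Coquelicot.
Open Scope R_scope.

Definition cont_on_01 (g : R -> R) : Prop :=
  forall x, 0 <= x <= 1 ->
    filterlim g (within (fun y => 0 <= y <= 1) (locally x)) (locally (g x)).

Definition C1_01_with_deriv (f h : R -> R) : Prop :=
  (forall x, 0 <= x <= 1 ->
     filterlim (fun y => (f y - f x) / (y - x))
       (within (fun y => 0 <= y <= 1 /\ y <> x) (locally x)) (locally (h x)))
  /\ cont_on_01 h.

Definition cond_q (q : R -> R) : Prop :=
  cont_on_01 q /\
  (forall x, 0 < x < 1 -> 0 < q x) /\
  q 0 = 0 /\ q 1 = 0 /\
  (exists M delta, 0 < delta /\ forall x, 0 < x < delta -> q x / x <= M).

Definition sol_P (h q : R -> R) (c : R) (z : R -> R) : Prop :=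
  cont_on_01 z /\
  (forall x, 0 < x < 1 -> is_derive z x (h x - c - q x / z x)) /\
  (forall x, 0 < x < 1 -> continuous (Derive z) x) /\
  (forall x, 0 < x < 1 -> z x < 0) /\
  z 0 = 0.

Definition sol_P00 (h q : R -> R) (c : R) (z : R -> R) : Prop :=
  sol_P h q c z /\ z 1 = 0.

(* Main.v *)
Require Import Defs.
From Stdlib Require Import Reals Lra.
From Coquelicot Require Import Coquelicot.
Open Scope R_scope.

Lemma cont_int (g : R -> R) x : cont_on_01 g -> 0 < x < 1 -> continuity_pt g x.
Proof.
  intros Hg Hx. apply continuity_pt_filterlim.
  intros P HP. specialize (Hg x (conj (Rlt_le _ _ (proj1 Hx)) (Rlt_le _ _ (proj2 Hx))) P HP).
  unfold filtermap, within in Hg |- *.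
  assert (HD : locally x (fun y => 0 <= y <= 1)).
  { apply locally_interval with (a := Finite 0) (b := Finite 1); simpl; try lra.
    intros; lra. }
  generalize (filter_and _ _ Hg HD). apply filter_imp. intros y [H1 H2]. auto.
Qed.

Lemma deriv_cont (f : R -> R) x l : is_derive f x l -> continuity_pt f x.
Proof.
  intros H. apply derivable_continuous_pt. exists l. apply is_derive_Reals. exact H.
Qed.

Lemma bounded01 (g : R -> R) : cont_on_01 g -> exists M, forall x, 0 <= x <= 1 -> Rabs (g x) <= M.
Proof.
  intros Hg.
  set (cl := fun y => Rmax 0 (Rmin y 1)).
  assert (Hc : forall x, 0 <= x <= 1 -> continuity_pt (fun y => g (cl y)) x).
  { intros x Hx. apply continuity_pt_filterlim.
    eapply filterlim_comp with (G := within (fun y => 0 <= y <= 1) (locally x)).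
    - intros P HP. unfold filtermap, within in *.
      destruct HP as [eps He]. exists eps. intros y Hy.
      assert (Hcl : 0 <= cl y <= 1).
      { unfold cl, Rmax, Rmin. repeat destruct Rle_dec; lra. }
      apply He.
      + unfold ball in *; simpl in *. unfold AbsRing_ball in *. unfold minus, plus, opp in *; simpl in *.
        apply Rabs_lt_between in Hy. apply Rabs_lt_between.
        unfold cl, Rmax, Rmin. repeat destruct Rle_dec; lra.
      + exact Hcl.
    - replace (cl x) with x. apply Hg; auto.
      unfold cl, Rmax, Rmin. repeat destruct Rle_dec; lra. }
  destruct (continuity_ab_maj _ 0 1 (Rle_0_1) Hc) as [a [Ha _]].
  destruct (continuity_ab_min _ 0 1 (Rle_0_1) Hc) as [b [Hb _]].
  exists (Rmax (Rabs (g (cl a))) (Rabs (g (cl b)))).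
  intros x Hx. specialize (Ha x Hx). specialize (Hb x Hx).
  replace (cl x) with x in Ha, Hb by (unfold cl, Rmax, Rmin; repeat destruct Rle_dec; lra).
  apply Rabs_le_between. 
  assert (H1 := Rle_abs (g (cl a))). assert (H2 := Rle_abs (- g (cl b))). rewrite Rabs_Ropp in H2.
  assert (H3 := Rmax_l (Rabs (g (cl a))) (Rabs (g (cl b)))).
  assert (H4 := Rmax_r (Rabs (g (cl a))) (Rabs (g (cl b)))).
  lra.
Qed.


Lemma D_minus (f g : R -> R) (x df dg : R) : is_derive f x df -> is_derive g x dg -> is_derive (fun t => f t - g t) x (df - dg).
Proof. intros H1 H2. exact (is_derive_minus f g x df dg H1 H2). Qed.
Lemma D_plus (f g : R -> R) (x df dg : R) : is_derive f x df -> is_derive g x dg -> is_derive (fun t => f t + g t) x (df + dg).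
Proof. intros H1 H2. exact (is_derive_plus f g x df dg H1 H2). Qed.
Lemma D_mult (f g : R -> R) (x df dg : R) : is_derive f x df -> is_derive g x dg -> is_derive (fun t => f t * g t) x (df * g x + f x * dg).
Proof. intros H1 H2. exact (is_derive_mult f g x df dg H1 H2 Rmult_comm). Qed.
Lemma D_opp (f : R -> R) (x df : R) : is_derive f x df -> is_derive (fun t => - f t) x (- df).
Proof. intros H1. exact (is_derive_opp f x df H1). Qed.
Lemma D_const (a x : R) : is_derive (fun _ : R => a) x 0.
Proof. exact (is_derive_const a x). Qed.
Lemma D_id (x : R) : is_derive (fun t : R => t) x 1.
Proof. exact (is_derive_id x). Qed.
Lemma D_ext (f g : R -> R) (x l : R) : (forall t, f t = g t) -> is_derive f x l -> is_derive g x l.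
Proof. intros He H. apply (is_derive_ext f g); auto. Qed.
Lemma D_eq (f : R -> R) (x l l' : R) : l = l' -> is_derive f x l -> is_derive f x l'.
Proof. intros ->; auto. Qed.

Lemma deriv_bound (f g df dg : R -> R) x y : x <= y ->
  (forall t, x <= t <= y -> is_derive f t (df t)) ->
  (forall t, x <= t <= y -> is_derive g t (dg t)) ->
  (forall t, x <= t <= y -> Rabs (df t) <= dg t) ->
  Rabs (f y - f x) <= g y - g x.
Proof.
  intros Hxy Hf Hg Hb.
  assert (Hm : forall t, Rmin x y = t \/ True) by auto.
  assert (E1 : exists c, x <= c <= y /\ (g y - f y) - (g x - f x) = (dg c - df c) * (y - x)).
  { destruct (MVT_gen (fun t => g t - f t) x y (fun t => dg t - df t)) as [c [Hc1 Hc2]].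
    - intros t Ht. rewrite Rmin_left in Ht by lra. rewrite Rmax_right in Ht by lra.
      apply D_minus; [apply Hg | apply Hf]; lra.
    - intros t Ht. rewrite Rmin_left in Ht by lra. rewrite Rmax_right in Ht by lra.
      apply continuity_pt_minus; [apply (deriv_cont _ _ (dg t)); apply Hg | apply (deriv_cont _ _ (df t)); apply Hf]; lra.
    - exists c. rewrite Rmin_left in Hc1 by lra. rewrite Rmax_right in Hc1 by lra. split; auto. }
  assert (E2 : exists c, x <= c <= y /\ (g y + f y) - (g x + f x) = (dg c + df c) * (y - x)).
  { destruct (MVT_gen (fun t => g t + f t) x y (fun t => dg t + df t)) as [c [Hc1 Hc2]].
    - intros t Ht. rewrite Rmin_left in Ht by lra. rewrite Rmax_right in Ht by lra.
      apply D_plus; [apply Hg | apply Hf]; lra.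
    - intros t Ht. rewrite Rmin_left in Ht by lra. rewrite Rmax_right in Ht by lra.
      apply continuity_pt_plus; [apply (deriv_cont _ _ (dg t)); apply Hg | apply (deriv_cont _ _ (df t)); apply Hf]; lra.
    - exists c. rewrite Rmin_left in Hc1 by lra. rewrite Rmax_right in Hc1 by lra. split; auto. }
  destruct E1 as [c1 [Hc1 E1]]. destruct E2 as [c2 [Hc2 E2]].
  specialize (Hb c1 Hc1) as B1. specialize (Hb c2 Hc2) as B2.
  apply Rabs_le_between in B1. apply Rabs_le_between in B2.
  assert (0 <= (dg c1 - df c1) * (y - x)) by (apply Rmult_le_pos; lra).
  assert (0 <= (dg c2 + df c2) * (y - x)) by (apply Rmult_le_pos; lra).
  apply Rabs_le_between. lra.
Qed.

Lemma deriv_pos_right (f : R -> R) x l : is_derive f x l -> 0 < l ->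
  exists d, 0 < d /\ forall y, x < y < x + d -> f x < f y.
Proof.
  intros H Hl. apply is_derive_Reals in H.
  destruct (H (l/2)) as [d Hd]; [lra|].
  exists d. split; [apply cond_pos|]. intros y Hy.
  specialize (Hd (y - x)). replace (x + (y - x)) with y in Hd by ring.
  assert (Hyx : y - x <> 0) by lra.
  assert (Hlt : Rabs (y - x) < d) by (rewrite Rabs_right; lra).
  specialize (Hd Hyx Hlt). apply Rabs_lt_between in Hd.
  assert (0 < (f y - f x) / (y - x)) by lra.
  assert (0 < y - x) by lra.
  assert (0 < (f y - f x) / (y - x) * (y - x)) by (apply Rmult_lt_0_compat; lra).
  field_simplify in H2; lra.
Qed.

Lemma deriv_neg_right (f : R -> R) x l : is_derive f x l -> l < 0 ->
  exists d, 0 < d /\ forall y, x < y < x + d -> f y < f x.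
Proof.
  intros H Hl. destruct (deriv_pos_right (fun t => - f t) x (- l)) as [d [Hd H2]].
  - apply D_opp. exact H.
  - lra.
  - exists d; split; auto. intros y Hy. specialize (H2 y Hy). lra.
Qed.


Definition Ginf (S : R -> Prop) : R := real (Glb_Rbar S).
Definition Gsup (S : R -> Prop) : R := real (Lub_Rbar S).

Lemma Ginf_spec (S : R -> Prop) r0 lb : S r0 -> (forall r, S r -> lb <= r) ->
  (forall r, S r -> Ginf S <= r) /\ (forall l, (forall r, S r -> l <= r) -> l <= Ginf S).
Proof.
  intros H0 Hlb. unfold Ginf. destruct (Glb_Rbar_correct S) as [H1 H2].
  destruct (Glb_Rbar S) as [v| |] eqn:E; simpl.
  - split.
    + intros r Hr. specialize (H1 r Hr). simpl in H1. exact H1.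
    + intros l Hl. specialize (H2 (Finite l)). simpl in H2. apply H2. intros r Hr. simpl. auto.
  - exfalso. specialize (H1 r0 H0). simpl in H1. exact H1.
  - exfalso. specialize (H2 (Finite lb)). simpl in H2. apply H2. intros r Hr. simpl. auto.
Qed.

Lemma Gsup_spec (S : R -> Prop) r0 ub : S r0 -> (forall r, S r -> r <= ub) ->
  (forall r, S r -> r <= Gsup S) /\ (forall u, (forall r, S r -> r <= u) -> Gsup S <= u).
Proof.
  intros H0 Hub. unfold Gsup. destruct (Lub_Rbar_correct S) as [H1 H2].
  destruct (Lub_Rbar S) as [v| |] eqn:E; simpl.
  - split.
    + intros r Hr. specialize (H1 r Hr). simpl in H1. exact H1.
    + intros u Hu. specialize (H2 (Finite u)). simpl in H2. apply H2. intros r Hr. simpl. auto.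
  - exfalso. specialize (H2 (Finite ub)). simpl in H2. apply H2. intros r Hr. simpl. auto.
  - exfalso. specialize (H1 r0 H0). simpl in H1. exact H1.
Qed.

Lemma Rmax_diff a b a' b' d : Rabs (a - a') <= d -> Rabs (b - b') <= d -> Rabs (Rmax a b - Rmax a' b') <= d.
Proof.
  intros H1 H2. apply Rabs_le_between in H1. apply Rabs_le_between in H2. apply Rabs_le_between.
  unfold Rmax. repeat destruct Rle_dec; lra.
Qed.

Lemma exRInt01 (f : R -> R) a b : (forall t, 0 < t < 1 -> continuity_pt f t) -> 0 < a < 1 -> 0 < b < 1 -> ex_RInt f a b.
Proof.
  intros Hf Ha Hb. apply (ex_RInt_continuous (V:=R_CompleteNormedModule)). intros z Hz.
  apply continuity_pt_filterlim. apply Hf.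
  split. apply Rlt_le_trans with (Rmin a b); [apply Rmin_glb_lt; lra| lra].
  apply Rle_lt_trans with (Rmax a b); [lra| apply Rmax_lub_lt; lra].
Qed.

Lemma deriv_RInt01 (f : R -> R) x : (forall t, 0 < t < 1 -> continuity_pt f t) -> 0 < x < 1 ->
  is_derive (fun y => RInt f (1/2) y) x (f x).
Proof.
  intros Hf Hx. apply (is_derive_RInt (V:=R_NormedModule) f (fun y => RInt f (1/2) y) (1/2)).
  - apply locally_interval with (a := Finite 0) (b := Finite 1); simpl; try lra.
    intros y H0 H1. apply (RInt_correct (V:=R_CompleteNormedModule)). apply exRInt01; auto; lra.
  - apply continuity_pt_filterlim. apply Hf; auto.
Qed.

Lemma FTC01 (F f : R -> R) a b : 0 < a -> a <= b -> b < 1 ->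
  (forall t, a <= t <= b -> is_derive F t (f t)) -> (forall t, a <= t <= b -> continuity_pt f t) ->
  RInt f a b = F b - F a.
Proof.
  intros Ha Hab Hb HF Hf. apply (is_RInt_unique (V:=R_CompleteNormedModule)).
  apply (is_RInt_derive (V:=R_CompleteNormedModule) F f a b).
  - intros t Ht. rewrite Rmin_left in Ht by lra. rewrite Rmax_right in Ht by lra. apply HF; lra.
  - intros t Ht. rewrite Rmin_left in Ht by lra. rewrite Rmax_right in Ht by lra.
    apply continuity_pt_filterlim. apply Hf; lra.
Qed.

Lemma RInt_Ch01 (f : R -> R) a b : (forall t, 0 < t < 1 -> continuity_pt f t) -> 0 < a < 1 -> 0 < b < 1 ->
  RInt f a b = RInt f (1/2) b - RInt f (1/2) a.
Proof.
  intros Hf Ha Hb.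
  assert (H := RInt_Chasles (V:=R_CompleteNormedModule) f (1/2) a b
    (exRInt01 f (1/2) a Hf ltac:(lra) Ha) (exRInt01 f a b Hf Ha Hb)).
  unfold plus in H; simpl in H. lra.
Qed.


Lemma cont01_eps (g : R -> R) x : cont_on_01 g -> 0 <= x <= 1 -> forall eps, 0 < eps ->
  exists d, 0 < d /\ forall y, 0 <= y <= 1 -> Rabs (y - x) < d -> Rabs (g y - g x) < eps.
Proof.
  intros Hg Hx eps He.
  specialize (Hg x Hx (fun u => Rabs (u - g x) < eps)).
  destruct Hg as [d Hd].
  - exists (mkposreal eps He). intros y Hy. exact Hy.
  - exists d. split; [apply cond_pos|]. intros y Hy1 Hy2. apply Hd; auto.
Qed.

Lemma crossing h q z w c cs : cond_q q -> sol_P h q c z -> sol_P00 h q cs w -> c < cs -> z 1 < 0 ->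
  forall x, 0 < x < 1 -> z x < w x.
Proof.
  intros Hq Hz Hw Hc Hz1 x0 Hx0.
  destruct Hz as [Zc [Zd [_ [Zneg Z0]]]]. destruct Hw as [[Wc [Wd [_ [Wneg W0]]]] W1].
  destruct (Rlt_dec (z x0) (w x0)) as [|Hn]; auto. exfalso.
  set (E := fun t => x0 <= t <= 1 /\ z t - w t >= 0).
  destruct (Gsup_spec E x0 1) as [Hs1 Hs2].
  { split; [lra|]. lra. }
  { intros r [Hr _]; lra. }
  set (s := Gsup E) in *.
  assert (Hxs : x0 <= s) by (apply Hs1; split; lra).
  assert (Hs1' : s <= 1) by (apply Hs2; intros r [Hr _]; lra).
  assert (Hds : z s - w s >= 0).
  { destruct (Rge_dec (z s - w s) 0) as [|Hneg]; auto. exfalso.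
    destruct (cont01_eps z s Zc ltac:(lra) (- (z s - w s) / 2) ltac:(lra)) as [d1 [Hd1 H1]].
    destruct (cont01_eps w s Wc ltac:(lra) (- (z s - w s) / 2) ltac:(lra)) as [d2 [Hd2 H2]].
    set (d := Rmin d1 d2).
    assert (Hd : 0 < d) by (apply Rmin_glb_lt; auto).
    assert (Hex : exists t, E t /\ s - d < t).
    { destruct (Rlt_dec (s - d) x0) as [Hl|Hl].
      - exists x0. split; [split; lra | lra].
      - apply Classical_Pred_Type.not_all_not_ex. intros Hall.
        assert (s <= s - d); [|lra].
        apply Hs2. intros r Hr. specialize (Hall r). destruct (Rle_dec r (s - d)); auto.
        exfalso. apply Hall. split; auto; lra. }
    destruct Hex as [t [[Ht1 Ht2] Ht3]].
    assert (t <= s) by (apply Hs1; split; auto).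
    assert (Ha : Rabs (t - s) < d1).
    { apply Rabs_lt_between. assert (d <= d1) by apply Rmin_l. lra. }
    assert (Hb : Rabs (t - s) < d2).
    { apply Rabs_lt_between. assert (d <= d2) by apply Rmin_r. lra. }
    specialize (H1 t ltac:(lra) Ha). specialize (H2 t ltac:(lra) Hb).
    apply Rabs_lt_between in H1. apply Rabs_lt_between in H2. lra. }
  assert (Hs1'' : s < 1).
  { destruct (Rle_lt_or_eq_dec _ _ Hs1') as [|He]; auto. exfalso. rewrite He in Hds. lra. }
  assert (Hsi : 0 < s < 1) by lra.
  assert (Hright : forall t, s < t <= 1 -> z t - w t < 0).
  { intros t Ht. destruct (Rlt_dec (z t - w t) 0) as [|Hn2]; auto. exfalso.
    assert (t <= s) by (apply Hs1; split; lra). lra. }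
  destruct (Rgt_dec (z s - w s) 0) as [Hpos|Hpos].
  - destruct (cont01_eps z s Zc ltac:(lra) ((z s - w s) / 2) ltac:(lra)) as [d1 [Hd1 H1]].
    destruct (cont01_eps w s Wc ltac:(lra) ((z s - w s) / 2) ltac:(lra)) as [d2 [Hd2 H2]].
    set (t := Rmin (s + Rmin d1 d2 / 2) 1).
    assert (0 < Rmin d1 d2) by (apply Rmin_glb_lt; auto).
    assert (Rmin d1 d2 <= d1) by apply Rmin_l. assert (Rmin d1 d2 <= d2) by apply Rmin_r.
    assert (Ht : s < t <= 1).
    { unfold t. split; [apply Rmin_glb_lt; lra| apply Rmin_r]. }
    assert (t <= s + Rmin d1 d2 / 2) by apply Rmin_l.
    specialize (Hright t Ht).
    assert (Ha : Rabs (t - s) < d1) by (apply Rabs_lt_between; lra).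
    assert (Hb : Rabs (t - s) < d2) by (apply Rabs_lt_between; lra).
    specialize (H1 t ltac:(lra) Ha). specialize (H2 t ltac:(lra) Hb).
    apply Rabs_lt_between in H1. apply Rabs_lt_between in H2. lra.
  - assert (Heq : z s = w s) by lra.
    assert (HD : is_derive (fun t => z t - w t) s ((h s - c - q s / z s) - (h s - cs - q s / w s))).
    { apply D_minus; [apply Zd | apply Wd]; auto. }
    rewrite Heq in HD.
    destruct (deriv_pos_right _ _ _ HD ltac:(lra)) as [d [Hd Hd2]].
    set (t := Rmin (s + d / 2) 1).
    assert (Ht : s < t <= 1).
    { unfold t. split; [apply Rmin_glb_lt; lra| apply Rmin_r]. }
    assert (t <= s + d / 2) by apply Rmin_l.
    specialize (Hright t Ht). specialize (Hd2 t ltac:(lra)). lra.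
Qed.


Lemma C_plus (f g : R -> R) x : continuity_pt f x -> continuity_pt g x -> continuity_pt (fun t => f t + g t) x.
Proof. intros H1 H2; exact (continuity_pt_plus f g x H1 H2). Qed.
Lemma C_minus (f g : R -> R) x : continuity_pt f x -> continuity_pt g x -> continuity_pt (fun t => f t - g t) x.
Proof. intros H1 H2; exact (continuity_pt_minus f g x H1 H2). Qed.
Lemma C_mult (f g : R -> R) x : continuity_pt f x -> continuity_pt g x -> continuity_pt (fun t => f t * g t) x.
Proof. intros H1 H2; exact (continuity_pt_mult f g x H1 H2). Qed.
Lemma C_div (f g : R -> R) x : continuity_pt f x -> continuity_pt g x -> g x <> 0 -> continuity_pt (fun t => f t / g t) x.
Proof. intros H1 H2 H3; exact (continuity_pt_div f g x H1 H2 H3). Qed.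
Lemma C_const (a x : R) : continuity_pt (fun _ => a) x.
Proof. apply continuity_pt_const. intros u v; reflexivity. Qed.
Lemma C_abs (f : R -> R) x : continuity_pt f x -> continuity_pt (fun t => Rabs (f t)) x.
Proof. intros H. exact (continuity_pt_comp f Rabs x H (Rcontinuity_abs (f x))). Qed.

Lemma C_opp (f : R -> R) x : continuity_pt f x -> continuity_pt (fun t => - f t) x.
Proof. intros H1. exact (continuity_pt_opp f x H1). Qed.

Lemma C_id x : continuity_pt (fun t => t) x.
Proof. apply derivable_continuous_pt. apply derivable_pt_id. Qed.

Section Main.
Variables (h q z w : R -> R) (c cs Zb HBh Qb : R).
Hypothesis Hh : cont_on_01 h.
Hypothesis Hq : cond_q q.
Hypothesis Hz : sol_P h q c z.
Hypothesis Hw : sol_P00 h q cs w.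
Hypothesis Hc : c < cs.
Hypothesis Hzw : forall x, 0 < x < 1 -> z x < w x.
Hypothesis HZb : forall x, 0 <= x <= 1 -> Rabs (z x) <= Zb.
Hypothesis HHb : forall x, 0 <= x <= 1 -> Rabs (h x) <= HBh.
Hypothesis HQb : forall x, 0 <= x <= 1 -> Rabs (q x) <= Qb.

Lemma zneg x : 0 < x < 1 -> z x < 0.
Proof. destruct Hz as [_ [_ [_ [H _]]]]. auto. Qed.
Lemma wneg x : 0 < x < 1 -> w x < 0.
Proof. destruct Hw as [[_ [_ [_ [H _]]]] _]. auto. Qed.
Lemma qpos x : 0 < x < 1 -> 0 < q x.
Proof. destruct Hq as [_ [H _]]. auto. Qed.
Lemma zd x : 0 < x < 1 -> is_derive z x (h x - c - q x / z x).
Proof. destruct Hz as [_ [H _]]. auto. Qed.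
Lemma wd x : 0 < x < 1 -> is_derive w x (h x - cs - q x / w x).
Proof. destruct Hw as [[_ [H _]] _]. auto. Qed.
Lemma hc x : 0 < x < 1 -> continuity_pt h x.
Proof. intros; apply cont_int; auto. Qed.
Lemma qc x : 0 < x < 1 -> continuity_pt q x.
Proof. intros; apply cont_int; auto. destruct Hq as [Hq0 _]; auto. Qed.
Lemma zc x : 0 < x < 1 -> continuity_pt z x.
Proof. intros; eapply deriv_cont; apply zd; auto. Qed.
Lemma wc x : 0 < x < 1 -> continuity_pt w x.
Proof. intros; eapply deriv_cont; apply wd; auto. Qed.
Lemma Zb_pos : 0 <= Zb.
Proof. specialize (HZb 0 ltac:(lra)). assert (H := Rabs_pos (z 0)). lra. Qed.
Lemma Qb_pos : 0 <= Qb.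
Proof. specialize (HQb 0 ltac:(lra)). assert (H := Rabs_pos (q 0)). lra. Qed.

Definition lam s := q s / (w s * w s).
Definition Lam s := RInt lam (1/2) s.
Definition om s := exp (- Lam s).
Definition A s := om s * w s.
Definition A' s := - lam s * om s * w s + om s * (h s - cs - q s / w s).
Definition gam s p := om s * (h s - c) - q s * (om s * om s) / p - lam s * p.
Definition Zp s := om s * z s.

Lemma lam_c x : 0 < x < 1 -> continuity_pt lam x.
Proof.
  intros Hx. unfold lam. apply C_div; [apply qc; auto| apply C_mult; apply wc; auto|].
  assert (w x < 0) by (apply wneg; auto). nra.
Qed.
Lemma lam_pos x : 0 < x < 1 -> 0 < lam x.
Proof. intros Hx. unfold lam. assert (w x < 0) by (apply wneg; auto). assert (0 < q x) by (apply qpos; auto).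
  apply Rdiv_lt_0_compat; nra. Qed.
Lemma Lam_d x : 0 < x < 1 -> is_derive Lam x (lam x).
Proof. intros Hx. apply deriv_RInt01; auto. apply lam_c. Qed.
Lemma om_d x : 0 < x < 1 -> is_derive om x (- lam x * om x).
Proof.
  intros Hx. unfold om.
  apply (D_eq _ _ (scal (- lam x) (exp (- Lam x)))).
  { unfold scal; simpl; unfold mult; simpl. ring. }
  apply (is_derive_comp exp (fun t => - Lam t)). apply is_derive_exp.
  apply D_opp. apply Lam_d; auto.
Qed.
Lemma om_pos x : 0 < om x.
Proof. apply exp_pos. Qed.
Lemma om_c x : 0 < x < 1 -> continuity_pt om x.
Proof. intros; eapply deriv_cont; apply om_d; auto. Qed.

Lemma A_d x : 0 < x < 1 -> is_derive A x (A' x).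
Proof.
  intros Hx. unfold A, A'. apply D_mult; [apply om_d | apply wd]; auto.
Qed.
Lemma A'_c x : 0 < x < 1 -> continuity_pt A' x.
Proof.
  intros Hx. unfold A'.
  assert (w x < 0) by (apply wneg; auto).
  apply C_plus.
  - apply C_mult; [apply C_mult|]; [apply C_opp; apply lam_c| apply om_c | apply wc]; auto.
  - apply C_mult; [apply om_c; auto|].
    apply C_minus; [apply C_minus|]; [apply hc; auto| apply C_const| ].
    apply C_div; [apply qc| apply wc| lra]; auto.
Qed.

Lemma gam_c (p : R -> R) x : 0 < x < 1 -> continuity_pt p x -> p x <> 0 -> continuity_pt (fun s => gam s (p s)) x.
Proof.
  intros Hx Hp Hp0. unfold gam.
  apply C_minus; [apply C_minus|].
  - apply C_mult; [apply om_c; auto| apply C_minus; [apply hc; auto| apply C_const]].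
  - apply C_div; auto. apply C_mult; [apply qc; auto| apply C_mult; apply om_c; auto].
  - apply C_mult; auto. apply lam_c; auto.
Qed.

Lemma Zp_d x : 0 < x < 1 -> is_derive Zp x (gam x (Zp x)).
Proof.
  intros Hx. unfold Zp. eapply D_eq; [| apply D_mult; [apply om_d| apply zd]; auto].
  unfold gam. assert (z x < 0) by (apply zneg; auto). assert (0 < om x) by apply om_pos.
  field. split; lra.
Qed.

Lemma gam_mono s p1 p2 : 0 < s < 1 -> p1 <= p2 -> p2 <= A s -> gam s p2 <= gam s p1.
Proof.
  intros Hs H12 H2. unfold gam, A, lam in *.
  assert (Hw0 : w s < 0) by (apply wneg; auto). assert (Hq0 : 0 < q s) by (apply qpos; auto).
  assert (Ho : 0 < om s) by apply om_pos.
  assert (Hp2 : p2 < 0) by nra. assert (Hp1 : p1 < 0) by lra.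
  set (O := om s) in *. set (W := w s) in *. set (Q := q s) in *.
  assert (E : Q * (O * O) / p1 - Q * (O * O) / p2 = Q * (O * O) * (p2 - p1) / (p1 * p2)) by (field; lra).
  assert (E2 : Q / (W * W) * p2 - Q / (W * W) * p1 = Q * (p2 - p1) / (W * W)) by (field; lra).
  assert (Hp12 : O * O * (W * W) <= p1 * p2).
  { assert (0 <= - (O*W)) by nra. assert (- (O * W) <= - p2) by lra.
    assert ((O * W) * (O * W) <= p2 * p2) by nra. nra. }
  assert (Key : Q * (O * O) * (p2 - p1) / (p1 * p2) <= Q * (p2 - p1) / (W * W)).
  { unfold Rdiv. apply Rle_trans with (Q * (p2 - p1) * (O * O * / (p1 * p2))).
    - right; ring.
    - apply Rle_trans with (Q * (p2 - p1) * (/ (W * W))); [| right; ring].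
      apply Rmult_le_compat_l; [nra|].
      apply Rle_trans with (O * O * / (O * O * (W * W))).
      + apply Rmult_le_compat_l; [nra|]. apply Rinv_le_contravar; [|lra].
        assert (0 < O * O) by nra. assert (0 < W * W) by nra. nra.
      + right. field. split; lra. }
  lra.
Qed.

Definition k1 s := om s * (Rabs (h s) + Rabs c + q s / Rabs (w s) + lam s * Rabs (z s)).

Lemma gam_bound s p : 0 < s < 1 -> Zp s <= p <= A s -> Rabs (gam s p) <= k1 s.
Proof.
  intros Hs [H1 H2]. unfold gam, k1, Zp, A in *.
  assert (Hw0 : w s < 0) by (apply wneg; auto). assert (Hq0 : 0 < q s) by (apply qpos; auto).
  assert (Hz0 : z s < 0) by (apply zneg; auto). assert (Hl : 0 < lam s) by (apply lam_pos; auto).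
  assert (Ho : 0 < om s) by apply om_pos.
  rewrite (Rabs_left (w s)) by lra. rewrite (Rabs_left (z s)) by lra.
  set (O := om s) in *. set (W := w s) in *. set (Q := q s) in *. set (L := lam s) in *. set (Z := z s) in *.
  assert (Hp : p < 0) by nra.
  assert (T1 : Rabs (O * (h s - c)) <= O * (Rabs (h s) + Rabs c)).
  { rewrite Rabs_mult. rewrite (Rabs_right O) by lra. apply Rmult_le_compat_l; [lra|].
    eapply Rle_trans; [apply Rabs_triang|]. rewrite Rabs_Ropp. lra. }
  assert (T2 : 0 <= Q * (O * O) / - p <= O * (Q / - W)).
  { split. apply Rdiv_le_0_compat; nra.
    apply Rle_trans with (Q * (O * O) / (O * - W)).
    - unfold Rdiv. apply Rmult_le_compat_l; [nra|]. apply Rinv_le_contravar; nra.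
    - right. field. split; lra. }
  assert (T3 : 0 <= L * - p <= O * (L * - Z)) by (split; nra).
  assert (E : O * (h s - c) - Q * (O * O) / p - L * p = O * (h s - c) + Q * (O * O) / - p + L * - p) by (field; lra).
  rewrite E. apply Rabs_le_between. apply Rabs_le_between in T1. split; nra.
Qed.


Definition kA s := Rabs (A' s).
Definition kE s := om s * ((Zb + 1) / (1 - s) + lam s * (Zb + 2)).
Definition k s := 4 * (kA s + k1 s) + kE s.
Definition G s := RInt k (1/2) s.

Lemma k1_pos s : 0 < s < 1 -> 0 <= k1 s.
Proof.
  intros Hs. unfold k1. assert (0 < om s) by apply om_pos.
  assert (0 < lam s) by (apply lam_pos; auto). assert (0 < q s) by (apply qpos; auto).
  assert (w s < 0) by (apply wneg; auto).
  assert (0 <= q s / Rabs (w s)) by (apply Rdiv_le_0_compat; [lra| apply Rabs_pos_lt; lra]).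
  assert (0 <= Rabs (h s)) by apply Rabs_pos. assert (0 <= Rabs c) by apply Rabs_pos.
  assert (0 <= Rabs (z s)) by apply Rabs_pos.
  apply Rmult_le_pos; [lra|]. assert (0 <= lam s * Rabs (z s)) by nra. lra.
Qed.
Lemma kE_pos s : 0 < s < 1 -> 0 <= kE s.
Proof.
  intros Hs. unfold kE. assert (0 < om s) by apply om_pos.
  assert (0 < lam s) by (apply lam_pos; auto). pose proof Zb_pos as HZ0.
  apply Rmult_le_pos; [lra|]. assert (0 <= (Zb + 1) / (1 - s)) by (apply Rdiv_le_0_compat; lra).
  assert (0 <= lam s * (Zb + 2)) by nra. lra.
Qed.
Lemma k_ge s : 0 < s < 1 -> 4 * (kA s + k1 s) <= k s /\ kE s <= k s /\ 0 <= kA s.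
Proof.
  intros Hs. unfold k. assert (H1 := k1_pos s Hs). assert (H2 := kE_pos s Hs).
  assert (H3 : 0 <= kA s) by apply Rabs_pos. lra.
Qed.

Lemma k1_c x : 0 < x < 1 -> continuity_pt k1 x.
Proof.
  intros Hx. unfold k1. assert (w x < 0) by (apply wneg; auto).
  apply C_mult; [apply om_c; auto|].
  apply C_plus; [apply C_plus; [apply C_plus|]|].
  - apply C_abs, hc; auto.
  - apply C_const.
  - apply C_div; [apply qc; auto| apply C_abs, wc; auto|]. apply Rabs_no_R0; lra.
  - apply C_mult; [apply lam_c; auto| apply C_abs, zc; auto].
Qed.
Lemma k_c x : 0 < x < 1 -> continuity_pt k x.
Proof.
  intros Hx. unfold k. apply C_plus; [apply C_mult; [apply C_const| apply C_plus]|].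
  - unfold kA. apply C_abs, A'_c; auto.
  - apply k1_c; auto.
  - unfold kE. apply C_mult; [apply om_c; auto|]. apply C_plus.
    + apply C_div; [apply C_const| apply C_minus; [apply C_const| apply C_id]| lra].
    + apply C_mult; [apply lam_c; auto| apply C_const].
Qed.
Lemma G_d x : 0 < x < 1 -> is_derive G x (k x).
Proof. intros Hx. apply deriv_RInt01; auto. apply k_c. Qed.
Lemma G_c x : 0 < x < 1 -> continuity_pt G x.
Proof. intros; eapply deriv_cont; apply G_d; auto. Qed.
Lemma G_mono x y : 0 < x -> x <= y -> y < 1 -> G x <= G y.
Proof.
  intros H1 H2 H3. assert (H := deriv_bound (fun _ => 0) G (fun _ => 0) k x y H2).
  assert (Hb0 : Rabs (0 - 0) <= G y - G x); [|rewrite Rminus_0_r, Rabs_R0 in Hb0; lra].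
  apply H.
  - intros; apply D_const.
  - intros; apply G_d; lra.
  - intros t Ht. rewrite Rabs_R0. assert (Ht' : 0 < t < 1) by lra. destruct (k_ge t Ht') as [A1 [A2 A3]].
    assert (H4 := k1_pos t Ht'). lra.
Qed.

Definition inL (p : R -> R) := (forall x, 0 < x < 1 -> Zp x <= p x <= A x) /\
  (forall x y, 0 < x -> x <= y -> y < 1 -> Rabs (p y - p x) <= G y - G x).

Lemma inL_c p x : inL p -> 0 < x < 1 -> continuity_pt p x.
Proof.
  intros [_ Hp] Hx. apply continuity_pt_locally. intros eps.
  assert (HG := proj1 (continuity_pt_locally G x) (G_c x Hx) eps).
  assert (HI : locally x (fun u => 0 < u < 1)).
  { apply locally_interval with (a := Finite 0) (b := Finite 1); simpl; auto; lra. }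
  generalize (filter_and _ _ HG HI). apply filter_imp. intros u [H1 H2].
  destruct (Rle_dec x u).
  - specialize (Hp x u ltac:(lra) ltac:(lra) ltac:(lra)).
    apply Rle_lt_trans with (1 := Hp). apply Rabs_lt_between in H1. lra.
  - specialize (Hp u x ltac:(lra) ltac:(lra) ltac:(lra)).
    rewrite Rabs_minus_sym. apply Rle_lt_trans with (1 := Hp). apply Rabs_lt_between in H1. lra.
Qed.

Lemma A_neg x : 0 < x < 1 -> A x < 0.
Proof. intros Hx. unfold A. assert (H := om_pos x). assert (w x < 0) by (apply wneg; auto). nra. Qed.

Lemma inL_neg p x : inL p -> 0 < x < 1 -> p x < 0.
Proof. intros [Hp _] Hx. specialize (Hp x Hx). assert (H := A_neg x Hx). lra. Qed.

Lemma gp_c p x : inL p -> 0 < x < 1 -> continuity_pt (fun s => gam s (p s)) x.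
Proof.
  intros Hp Hx. apply gam_c; auto. apply inL_c; auto. assert (H := inL_neg p x Hp Hx). lra.
Qed.

Lemma Zp_c x : 0 < x < 1 -> continuity_pt Zp x.
Proof. intros; unfold Zp; apply C_mult; [apply om_c| apply zc]; auto. Qed.

Lemma Zp_le_A x : 0 < x < 1 -> Zp x <= A x.
Proof. intros Hx. unfold Zp, A. assert (H := om_pos x). assert (H2 := Hzw x Hx). nra. Qed.

Lemma Zp_inL : inL Zp.
Proof.
  split.
  - intros x Hx. split; [lra| apply Zp_le_A; auto].
  - intros x y H1 H2 H3. apply (deriv_bound Zp G (fun s => gam s (Zp s)) k x y H2).
    + intros; apply Zp_d; lra.
    + intros; apply G_d; lra.
    + intros t Ht. assert (Ht' : 0 < t < 1) by lra.
      eapply Rle_trans; [apply gam_bound; auto; split; [lra| apply Zp_le_A; auto]|].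
      destruct (k_ge t Ht') as [A1 [A2 A3]]. assert (H4 := k1_pos t Ht'). lra.
Qed.

Definition Ip (p : R -> R) b := RInt (fun s => gam s (p s)) (1/2) b.
Definition Ep (p : R -> R) b := A b - Ip p b.
Definition mm (p : R -> R) x := Ginf (fun r => exists b, x <= b < 1 /\ r = Ep p b).
Definition Phi (p : R -> R) x := mm p x + Ip p x.

Lemma RIntxb p x b : inL p -> 0 < x -> x <= b -> b < 1 ->
  Ep p b + Ip p x = A b - RInt (fun s => gam s (p s)) x b.
Proof.
  intros Hp H1 H2 H3. unfold Ep, Ip. rewrite (RInt_Ch01 _ x b); [ring| | lra| lra].
  intros t Ht; apply gp_c; auto.
Qed.

Lemma Lower p x b : inL p -> 0 < x -> x <= b -> b < 1 ->
  Zp x <= A b - RInt (fun s => gam s (p s)) x b.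
Proof.
  intros Hp H1 H2 H3.
  assert (Hle : RInt (fun s => gam s (p s)) x b <= RInt (fun s => gam s (Zp s)) x b).
  { apply RInt_le; auto.
    - apply exRInt01; [intros; apply gp_c; auto| lra| lra].
    - apply exRInt01; [| lra| lra]. intros t Ht. apply gam_c; auto. apply Zp_c; auto.
      unfold Zp. assert (H := om_pos t). assert (z t < 0) by (apply zneg; auto). nra.
    - intros t Ht. apply gam_mono; [lra| |]; destruct Hp as [Hp _]; apply Hp; lra. }
  rewrite (FTC01 Zp (fun s => gam s (Zp s)) x b) in Hle; auto.
  - assert (H := Zp_le_A b ltac:(lra)). lra.
  - intros; apply Zp_d; lra.
  - intros t Ht. apply gam_c; [lra| apply Zp_c; lra|].
    unfold Zp. assert (H := om_pos t). assert (z t < 0) by (apply zneg; lra). nra.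
Qed.

Lemma mm_spec p x : inL p -> 0 < x < 1 ->
  (forall b, x <= b < 1 -> mm p x <= Ep p b) /\
  (forall l, (forall b, x <= b < 1 -> l <= Ep p b) -> l <= mm p x).
Proof.
  intros Hp Hx. unfold mm.
  destruct (Ginf_spec (fun r => exists b, x <= b < 1 /\ r = Ep p b) (Ep p x) (Zp x - Ip p x)) as [G1 G2].
  - exists x; split; [lra| auto].
  - intros r [b [Hb ->]]. assert (H := Lower p x b Hp ltac:(lra) ltac:(lra) ltac:(lra)).
    rewrite <- RIntxb in H; auto; lra.
  - split.
    + intros b Hb. apply G1. exists b; auto.
    + intros l Hl. apply G2. intros r [b [Hb ->]]. auto.
Qed.

Lemma Phi_le p x b : inL p -> 0 < x -> x <= b -> b < 1 -> Phi p x <= A b - RInt (fun s => gam s (p s)) x b.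
Proof.
  intros Hp H1 H2 H3. rewrite <- RIntxb; auto. unfold Phi.
  destruct (mm_spec p x Hp ltac:(lra)) as [M1 _]. specialize (M1 b ltac:(lra)). lra.
Qed.

Lemma Phi_ge p x l : inL p -> 0 < x < 1 -> (forall b, x <= b < 1 -> l <= A b - RInt (fun s => gam s (p s)) x b) ->
  l <= Phi p x.
Proof.
  intros Hp Hx Hl. unfold Phi. destruct (mm_spec p x Hp Hx) as [_ M2].
  assert (l - Ip p x <= mm p x); [|lra].
  apply M2. intros b Hb. specialize (Hl b Hb). rewrite <- RIntxb in Hl; auto; lra.
Qed.

Lemma Phi_mono p1 p2 : inL p1 -> inL p2 -> (forall x, 0 < x < 1 -> p1 x <= p2 x) ->
  forall x, 0 < x < 1 -> Phi p1 x <= Phi p2 x.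
Proof.
  intros H1 H2 H12 x Hx. apply Phi_ge; auto. intros b Hb.
  eapply Rle_trans; [apply (Phi_le p1 x b); auto; lra|].
  assert (RInt (fun s => gam s (p2 s)) x b <= RInt (fun s => gam s (p1 s)) x b); [|lra].
  apply RInt_le; [lra| | |].
  - apply exRInt01; [intros; apply gp_c; auto| lra| lra].
  - apply exRInt01; [intros; apply gp_c; auto| lra| lra].
  - intros t Ht. apply gam_mono; [lra| apply H12; lra| destruct H2 as [H2 _]; apply H2; lra].
Qed.

Lemma Phi_bounds p x : inL p -> 0 < x < 1 -> Zp x <= Phi p x <= A x.
Proof.
  intros Hp Hx. split.
  - apply Phi_ge; auto. intros b Hb. apply Lower; auto; lra.
  - eapply Rle_trans; [apply (Phi_le p x x); auto; lra|].
    rewrite RInt_point. simpl. unfold zero; simpl. lra.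
Qed.


Lemma Ip_d p x : inL p -> 0 < x < 1 -> is_derive (Ip p) x (gam x (p x)).
Proof. intros Hp Hx. unfold Ip. apply (deriv_RInt01 (fun s => gam s (p s))); auto. intros; apply gp_c; auto. Qed.

Lemma Ep_d p x : inL p -> 0 < x < 1 -> is_derive (Ep p) x (A' x - gam x (p x)).
Proof. intros Hp Hx. unfold Ep. apply D_minus; [apply A_d| apply Ip_d]; auto. Qed.

Lemma G4_d x a : 0 < x < 1 -> is_derive (fun t => a * G t) x (a * k x).
Proof. intros Hx. apply is_derive_scal. apply G_d; auto. Qed.

Lemma Ip_G p x y : inL p -> 0 < x -> x <= y -> y < 1 -> Rabs (Ip p y - Ip p x) <= / 4 * G y - / 4 * G x.
Proof.
  intros Hp H1 H2 H3. apply (deriv_bound (Ip p) (fun t => /4 * G t) (fun t => gam t (p t)) (fun t => /4 * k t) x y H2).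
  - intros; apply Ip_d; auto; lra.
  - intros; apply G4_d; lra.
  - intros t Ht. assert (Ht' : 0 < t < 1) by lra.
    eapply Rle_trans; [apply gam_bound; auto; destruct Hp as [Hp _]; apply Hp; auto|].
    destruct (k_ge t Ht') as [A1 [A2 A3]]. lra.
Qed.

Lemma Ep_G p b y : inL p -> 0 < b -> b <= y -> y < 1 -> Rabs (Ep p y - Ep p b) <= / 2 * G y - / 2 * G b.
Proof.
  intros Hp H1 H2 H3. apply (deriv_bound (Ep p) (fun t => /2 * G t) (fun t => A' t - gam t (p t)) (fun t => /2 * k t) b y H2).
  - intros; apply Ep_d; auto; lra.
  - intros; apply G4_d; lra.
  - intros t Ht. assert (Ht' : 0 < t < 1) by lra.
    assert (B := gam_bound t (p t) Ht' (proj1 Hp t Ht')).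
    eapply Rle_trans; [apply Rabs_triang|]. rewrite Rabs_Ropp.
    destruct (k_ge t Ht') as [A1 [A2 A3]]. unfold kA in *.
    pose proof (Rabs_pos (gam t (p t))). lra.
Qed.

Lemma mm_G p x y : inL p -> 0 < x -> x <= y -> y < 1 -> mm p x <= mm p y /\ mm p y - / 2 * (G y - G x) <= mm p x.
Proof.
  intros Hp H1 H2 H3.
  destruct (mm_spec p x Hp ltac:(lra)) as [X1 X2]. destruct (mm_spec p y Hp ltac:(lra)) as [Y1 Y2].
  assert (HG := G_mono x y H1 H2 H3).
  split.
  - apply Y2. intros b Hb. apply X1. lra.
  - apply X2. intros b Hb. destruct (Rle_dec y b).
    + specialize (Y1 b ltac:(lra)). lra.
    + assert (E := Ep_G p b y Hp ltac:(lra) ltac:(lra) H3). apply Rabs_le_between in E.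
      specialize (Y1 y ltac:(lra)). assert (HG2 := G_mono x b H1 ltac:(lra) ltac:(lra)). lra.
Qed.

Lemma Phi_inL p : inL p -> inL (Phi p).
Proof.
  intros Hp. split.
  - intros x Hx. apply Phi_bounds; auto.
  - intros x y H1 H2 H3. unfold Phi.
    destruct (mm_G p x y Hp H1 H2 H3) as [M1 M2].
    assert (I := Ip_G p x y Hp H1 H2 H3). apply Rabs_le_between in I.
    apply Rabs_le_between. lra.
Qed.

Definition P (p : R -> R) := inL p /\ (forall x, 0 < x < 1 -> p x <= Phi p x).
Definition Sp x := Gsup (fun r => exists p, P p /\ r = p x).

Lemma P_Zp : P Zp.
Proof. split; [apply Zp_inL|]. intros x Hx. apply Phi_bounds; auto. apply Zp_inL. Qed.

Lemma Sp_spec x : 0 < x < 1 -> (forall p, P p -> p x <= Sp x) /\ (forall u, (forall p, P p -> p x <= u) -> Sp x <= u).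
Proof.
  intros Hx. unfold Sp. destruct (Gsup_spec (fun r => exists p, P p /\ r = p x) (Zp x) (A x)) as [S1 S2].
  - exists Zp; split; auto; apply P_Zp.
  - intros r [p [[[Hp _] _] ->]]. apply Hp; auto.
  - split.
    + intros p Hp. apply S1. exists p; auto.
    + intros u Hu. apply S2. intros r [p [Hp ->]]. auto.
Qed.

Lemma Sp_inL : inL Sp.
Proof.
  split.
  - intros x Hx. destruct (Sp_spec x Hx) as [S1 S2]. split.
    + apply S1; apply P_Zp.
    + apply S2. intros p [[Hp _] _]. apply Hp; auto.
  - intros x y H1 H2 H3. destruct (Sp_spec x ltac:(lra)) as [X1 X2]. destruct (Sp_spec y ltac:(lra)) as [Y1 Y2].
    apply Rabs_le_between. split.
    + assert (Sp x <= Sp y + (G y - G x)); [|lra].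
      apply X2. intros p Hp. assert (E := proj2 (proj1 Hp) x y H1 H2 H3). apply Rabs_le_between in E.
      specialize (Y1 p Hp). lra.
    + assert (Sp y <= Sp x + (G y - G x)); [|lra].
      apply Y2. intros p Hp. assert (E := proj2 (proj1 Hp) x y H1 H2 H3). apply Rabs_le_between in E.
      specialize (X1 p Hp). lra.
Qed.

Lemma Sp_le_Phi x : 0 < x < 1 -> Sp x <= Phi Sp x.
Proof.
  intros Hx. destruct (Sp_spec x Hx) as [_ S2]. apply S2. intros p [Hp Hp2].
  eapply Rle_trans; [apply Hp2; auto|]. apply Phi_mono; auto. apply Sp_inL.
  intros t Ht. apply (proj1 (Sp_spec t Ht)). split; auto.
Qed.

Lemma Sp_fix x : 0 < x < 1 -> Sp x = Phi Sp x.
Proof.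
  intros Hx. apply Rle_antisym; [apply Sp_le_Phi; auto|].
  apply (proj1 (Sp_spec x Hx)). split.
  - apply Phi_inL, Sp_inL.
  - intros t Ht. apply Phi_mono; auto. apply Sp_inL. apply Phi_inL, Sp_inL. apply Sp_le_Phi.
Qed.


Lemma Sp_lt x : 0 < x < 1 -> Sp x < A x.
Proof.
  intros Hx. destruct (proj1 Sp_inL x Hx) as [_ H1].
  destruct (Rle_lt_or_eq_dec _ _ H1) as [|Heq]; auto. exfalso.
  assert (HF := Sp_fix x Hx). unfold Phi in HF.
  destruct (mm_spec Sp x Sp_inL Hx) as [M1 _].
  assert (Hd := Ep_d Sp x Sp_inL Hx). rewrite Heq in Hd.
  assert (E : A' x - gam x (A x) = om x * (c - cs)).
  { unfold A', gam, A, lam. assert (H := om_pos x). assert (w x < 0) by (apply wneg; auto). field. split; lra. }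
  rewrite E in Hd.
  assert (Hneg : om x * (c - cs) < 0). { assert (H := om_pos x). nra. }
  destruct (deriv_neg_right _ _ _ Hd Hneg) as [d [Hd0 Hd1]].
  set (y := Rmin (x + d / 2) ((x + 1) / 2)).
  assert (Hy1 : y <= x + d / 2) by apply Rmin_l. assert (Hy2 : y <= (x + 1) / 2) by apply Rmin_r.
  assert (Hy3 : x < y) by (apply Rmin_glb_lt; lra).
  specialize (Hd1 y ltac:(lra)). specialize (M1 y ltac:(lra)).
  unfold Ep at 2 in Hd1. lra.
Qed.

Lemma ballR x (eps : posreal) u : ball x eps u -> Rabs (u - x) < eps.
Proof. intros H. exact H. Qed.

Lemma Sp_d x : 0 < x < 1 -> is_derive Sp x (gam x (Sp x)).
Proof.
  intros Hx. assert (HSp := Sp_inL).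
  set (gap := Ep Sp x - mm Sp x).
  assert (Hgap : 0 < gap).
  { unfold gap. assert (H1 := Sp_lt x Hx). assert (H2 := Sp_fix x Hx). unfold Phi, Ep in *. lra. }
  assert (HEc : continuity_pt (Ep Sp) x) by (eapply deriv_cont; apply Ep_d; auto).
  assert (HL := proj1 (continuity_pt_locally (Ep Sp) x) HEc (mkposreal (gap / 2) ltac:(lra))).
  assert (HI : locally x (fun u => 0 < u < 1)).
  { apply locally_interval with (a := Finite 0) (b := Finite 1); simpl; auto; lra. }
  destruct (filter_and _ _ HL HI) as [eps Heps].
  assert (Hball : forall u, Rabs (u - x) < eps -> Rabs (Ep Sp u - Ep Sp x) < gap / 2 /\ 0 < u < 1).
  { intros u Hu. apply (Heps u). exact Hu. }
  apply (is_derive_ext_loc (fun y => mm Sp x + Ip Sp y)).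
  - exists eps. intros y Hy. apply ballR in Hy.
    destruct (Hball y Hy) as [_ Hy01].
    rewrite (Sp_fix y Hy01). unfold Phi. f_equal. symmetry.
    destruct (mm_spec Sp x HSp Hx) as [X1 X2]. destruct (mm_spec Sp y HSp Hy01) as [Y1 Y2].
    destruct (Rle_dec y x).
    + apply Rle_antisym.
      * apply X2. intros b Hb. apply Y1. lra.
      * apply Y2. intros b Hb. destruct (Rle_dec x b).
        -- apply X1; lra.
        -- assert (Hb2 : Rabs (b - x) < eps) by (apply Rabs_lt_between; apply Rabs_lt_between in Hy; lra).
           destruct (Hball b Hb2) as [Hb3 _]. apply Rabs_lt_between in Hb3. unfold gap in Hb3. lra.
    + assert (Hxy : mm Sp x <= mm Sp y).
      { apply Y2. intros b Hb. apply X1. lra. }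
      destruct (Rle_lt_dec (mm Sp y) (mm Sp x)) as [Hle|Hlt]; [lra|]. exfalso.
      assert (Rmin (mm Sp y) (mm Sp x + gap / 2) <= mm Sp x); [|
        assert (mm Sp x < Rmin (mm Sp y) (mm Sp x + gap / 2)) by (apply Rmin_glb_lt; lra); lra].
      apply X2. intros b Hb. destruct (Rle_dec y b).
      * eapply Rle_trans; [apply Rmin_l|]. apply Y1. lra.
      * eapply Rle_trans; [apply Rmin_r|].
        assert (Hb2 : Rabs (b - x) < eps) by (apply Rabs_lt_between; apply Rabs_lt_between in Hy; lra).
        destruct (Hball b Hb2) as [Hb3 _]. apply Rabs_lt_between in Hb3. unfold gap in *. lra.
  - eapply D_eq; [| apply D_plus; [apply D_const| apply Ip_d; auto]]. ring.
Qed.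

Definition U x := Sp x / om x.

Lemma Sp_neg x : 0 < x < 1 -> Sp x < 0.
Proof. intros Hx. assert (H1 := Sp_lt x Hx). assert (H2 := A_neg x Hx). lra. Qed.

Lemma U_d x : 0 < x < 1 -> is_derive U x (h x - c - q x / U x).
Proof.
  intros Hx. unfold U.
  assert (Ho := om_pos x). assert (Hs := Sp_neg x Hx).
  eapply D_eq; [| apply is_derive_div; [apply Sp_d| apply om_d| ]; auto; lra].
  unfold gam. field. split; lra.
Qed.

Lemma U_bounds x : 0 < x < 1 -> z x <= U x < w x.
Proof.
  intros Hx. assert (Ho := om_pos x). assert (H1 := Sp_lt x Hx). destruct (proj1 Sp_inL x Hx) as [H2 _].
  unfold U, A, Zp in *. split.
  - apply Rmult_le_reg_r with (om x); auto. field_simplify; lra.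
  - apply Rmult_lt_reg_r with (om x); auto. field_simplify; lra.
Qed.


Lemma Gctrl_deriv (f df : R -> R) x y : 0 < x -> x <= y -> y < 1 ->
  (forall t, x <= t <= y -> is_derive f t (df t)) -> (forall t, x <= t <= y -> Rabs (df t) <= k t) ->
  Rabs (f y - f x) <= G y - G x.
Proof.
  intros H1 H2 H3 Hd Hb. apply (deriv_bound f G df k x y H2 Hd); auto.
  intros; apply G_d; lra.
Qed.

Definition rho (b K f1 : R) t := om t * (b - K * (1 - Rmax t f1)).
Definition rho1 (b K : R) t := om t * (b - K * (1 - t)).
Definition rho0 (v : R) t := om t * v.

Lemma rho1_d b K t : 0 < t < 1 -> is_derive (rho1 b K) t (- lam t * om t * (b - K * (1 - t)) + om t * K).
Proof.
  intros Ht. unfold rho1.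
  apply (D_eq _ _ ((- lam t * om t) * (b - K * (1 - t)) + om t * (0 - K * (0 - 1)))); [ring|].
  apply (D_mult om (fun u => b - K * (1 - u))); [apply om_d; auto|].
  apply (D_minus (fun _ => b) (fun u => K * (1 - u))); [apply D_const|].
  apply (is_derive_scal (fun u => 1 - u) t K).
  apply (D_minus (fun _ => 1) (fun u => u)); [apply D_const| apply D_id].
Qed.
Lemma rho0_d v t : 0 < t < 1 -> is_derive (rho0 v) t (- lam t * om t * v + om t * 0).
Proof. intros Ht. unfold rho0. apply (D_mult om (fun _ => v)); [apply om_d; auto| apply D_const]. Qed.

Lemma rho1_c b K t : 0 < t < 1 -> continuity_pt (rho1 b K) t.
Proof. intros; eapply deriv_cont; apply rho1_d; auto. Qed.

Lemma rho_G b K f1 : 0 < f1 < 1 -> -1 <= b <= 0 -> 0 <= K -> K * (1 - f1) <= Zb + 1 ->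
  forall x y, 0 < x -> x <= y -> y < 1 -> Rabs (rho b K f1 y - rho b K f1 x) <= G y - G x.
Proof.
  intros Hf1 Hb HK HKf.
  assert (HZ := Zb_pos).
  assert (C0 : forall x y, 0 < x -> x <= y -> y <= f1 -> Rabs (rho b K f1 y - rho b K f1 x) <= G y - G x).
  { intros x y H1 H2 H3.
    assert (E : forall t, t <= f1 -> rho b K f1 t = rho0 (b - K * (1 - f1)) t).
    { intros t Ht. unfold rho, rho0. rewrite Rmax_right by lra. auto. }
    rewrite (E y), (E x) by lra.
    apply (Gctrl_deriv _ (fun t => - lam t * om t * (b - K * (1 - f1)) + om t * 0)); auto; try lra.
    - intros; apply rho0_d; lra.
    - intros t Ht. assert (Ht' : 0 < t < 1) by lra. destruct (k_ge t Ht') as [_ [A2 _]].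
      eapply Rle_trans; [| apply A2]. unfold kE.
      assert (Ho := om_pos t). assert (Hl := lam_pos t Ht').
      assert (0 <= K * (1 - f1)) by (apply Rmult_le_pos; lra).
      replace (- lam t * om t * (b - K * (1 - f1)) + om t * 0) with (om t * (lam t * (K * (1 - f1) - b))) by ring.
      rewrite Rabs_right by (apply Rle_ge; apply Rmult_le_pos; [lra| apply Rmult_le_pos; lra]).
      apply Rmult_le_compat_l; [lra|].
      assert (0 <= (Zb + 1) / (1 - t)) by (apply Rdiv_le_0_compat; lra).
      assert (lam t * (K * (1 - f1) - b) <= lam t * (Zb + 2)) by (apply Rmult_le_compat_l; lra).
      lra. }
  assert (C1 : forall x y, f1 <= x -> x <= y -> y < 1 -> Rabs (rho b K f1 y - rho b K f1 x) <= G y - G x).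
  { intros x y H1 H2 H3.
    assert (E : forall t, f1 <= t -> rho b K f1 t = rho1 b K t).
    { intros t Ht. unfold rho, rho1. rewrite Rmax_left by lra. auto. }
    rewrite (E y), (E x) by lra.
    apply (Gctrl_deriv _ (fun t => - lam t * om t * (b - K * (1 - t)) + om t * K)); auto; try lra.
    - intros; apply rho1_d; lra.
    - intros t Ht. assert (Ht' : 0 < t < 1) by lra. destruct (k_ge t Ht') as [_ [A2 _]].
      eapply Rle_trans; [| apply A2]. unfold kE.
      assert (Ho := om_pos t). assert (Hl := lam_pos t Ht').
      assert (0 <= K * (1 - t) <= Zb + 1).
      { split; [apply Rmult_le_pos; lra|]. apply Rle_trans with (K * (1 - f1)); auto.
        apply Rmult_le_compat_l; lra. }
      assert (HK2 : K <= (Zb + 1) / (1 - t)).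
      { apply Rmult_le_reg_r with (1 - t); [lra|]. field_simplify; [|lra]. lra. }
      replace (- lam t * om t * (b - K * (1 - t)) + om t * K) with (om t * (lam t * (K * (1 - t) - b) + K)) by ring.
      rewrite Rabs_right by (apply Rle_ge; apply Rmult_le_pos; [lra| ]; assert (0 <= lam t * (K * (1 - t) - b)) by (apply Rmult_le_pos; lra); lra).
      apply Rmult_le_compat_l; [lra|].
      assert (lam t * (K * (1 - t) - b) <= lam t * (Zb + 2)) by (apply Rmult_le_compat_l; lra).
      lra. }
  intros x y H1 H2 H3. destruct (Rle_dec y f1); [apply C0; auto|].
  destruct (Rle_dec f1 x); [apply C1; auto; lra|].
  assert (T1 := C0 x f1 H1 ltac:(lra) ltac:(lra)). assert (T2 := C1 f1 y ltac:(lra) ltac:(lra) H3).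
  apply Rabs_le_between in T1. apply Rabs_le_between in T2. apply Rabs_le_between. lra.
Qed.


Lemma U_near1_aux eps : 0 < eps <= 1 -> exists d, 0 < d /\ forall x, 1 - d < x < 1 -> - eps < U x.
Proof.
  intros He.
  apply Classical_Prop.NNPP. intros Hn.
  assert (Hbad : forall d, 0 < d -> exists x, 1 - d < x < 1 /\ U x <= - eps).
  { intros d Hd. apply Classical_Prop.NNPP. intros Hnx. apply Hn. exists d. split; auto.
    intros x Hx. destruct (Rlt_dec (- eps) (U x)) as [|Hl]; auto. exfalso; apply Hnx; exists x; split; auto; lra. }
  assert (HZ := Zb_pos). assert (HQ := Qb_pos).
  destruct Hw as [[Wc _] W1].
  destruct (cont01_eps w 1 Wc ltac:(lra) (eps / 4) ltac:(lra)) as [dw [Hdw Hw1]].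
  rewrite W1 in Hw1.
  set (b := - eps / 4).
  set (R0 := HBh + Rabs c + 4 * Qb / eps + 1).
  assert (HHB : 0 <= HBh) by (specialize (HHb 0 ltac:(lra)); pose proof (Rabs_pos (h 0)); lra).
  assert (HR0 : 1 <= R0).
  { unfold R0. assert (0 <= 4 * Qb / eps) by (apply Rdiv_le_0_compat; lra). pose proof (Rabs_pos c). lra. }
  set (d1 := Rmin (1/2) (Rmin (dw / 2) ((Zb + 1) / R0))).
  assert (Hd1a : d1 <= 1/2) by apply Rmin_l.
  assert (Hd1b : d1 <= dw / 2) by (eapply Rle_trans; [apply Rmin_r| apply Rmin_l]).
  assert (Hd1c : d1 <= (Zb + 1) / R0) by (eapply Rle_trans; [apply Rmin_r| apply Rmin_r]).
  assert (Hd1 : 0 < d1).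
  { apply Rmin_glb_lt; [lra| apply Rmin_glb_lt; [lra|]]. apply Rdiv_lt_0_compat; lra. }
  set (f1 := 1 - d1).
  set (K := (Zb + 1) / d1).
  assert (HK : R0 <= K).
  { unfold K. apply Rmult_le_reg_r with d1; auto. field_simplify; [|lra].
    apply Rmult_le_reg_r with (/ R0); [apply Rinv_0_lt_compat; lra|].
    replace (R0 * d1 * / R0) with d1 by (field; lra). exact Hd1c. }
  assert (HKf : K * (1 - f1) = Zb + 1) by (unfold K, f1; field; lra).
  destruct (Hbad (Rmin d1 (eps / (2 * K)))) as [x0 [Hx0 Hux0]].
  { apply Rmin_glb_lt; auto. apply Rdiv_lt_0_compat; lra. }
  assert (Hx0a : 1 - x0 < d1) by (assert (Rmin d1 (eps / (2 * K)) <= d1) by apply Rmin_l; lra).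
  assert (Hx0b : 1 - x0 < eps / (2 * K)) by (assert (Rmin d1 (eps / (2 * K)) <= eps / (2 * K)) by apply Rmin_r; lra).
  assert (HKx0 : K * (1 - x0) < eps / 2).
  { apply Rmult_lt_compat_l with (r := K) in Hx0b; [|lra].
    replace (K * (eps / (2 * K))) with (eps / 2) in Hx0b by (field; lra). exact Hx0b. }
  set (rh := rho b K f1).
  set (p' := fun t => Rmax (Sp t) (rh t)).
  assert (F1 : forall t, 0 < t <= f1 -> rh t < Zp t).
  { intros t Ht. unfold rh, rho, Zp. rewrite Rmax_right by lra. rewrite HKf.
    assert (Ht' : 0 <= t <= 1) by (unfold f1 in *; lra).
    specialize (HZb t Ht'). apply Rabs_le_between in HZb. assert (H := om_pos t).
    apply Rmult_lt_compat_l; auto. unfold b; lra. }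
  assert (F2 : forall t, f1 <= t -> rh t = rho1 b K t).
  { intros t Ht. unfold rh, rho, rho1. rewrite Rmax_left by lra. auto. }
  assert (F4 : forall t, f1 <= t < 1 -> rh t <= A t).
  { intros t Ht. rewrite F2 by lra. unfold rho1, A.
    assert (Hwt : Rabs (w t - 0) < eps / 4).
    { apply Hw1; [unfold f1 in *; lra|]. apply Rabs_lt_between. unfold f1 in *; lra. }
    apply Rabs_lt_between in Hwt. assert (H := om_pos t). apply Rmult_le_compat_l; [lra|].
    assert (0 <= K * (1 - t)) by (apply Rmult_le_pos; lra). unfold b; lra. }
  assert (F5 : forall t, 0 < t < 1 -> rh t <= A t).
  { intros t Ht. destruct (Rle_dec t f1); [|apply F4; lra].
    assert (H1 := F1 t ltac:(lra)). assert (H2 := Zp_le_A t Ht). lra. }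
  assert (Hf1 : 0 < f1 < 1) by (unfold f1; lra).
  assert (HrG := rho_G b K f1 Hf1 ltac:(unfold b; lra) ltac:(lra) ltac:(lra)).
  assert (Hp'L : inL p').
  { split.
    - intros x Hx. destruct (proj1 Sp_inL x Hx) as [S1 S2]. unfold p'. split.
      + eapply Rle_trans; [apply S1| apply Rmax_l].
      + unfold Rmax; destruct (Rle_dec (Sp x) (rh x)); [apply F5; auto| exact S2].
    - intros x y H1 H2 H3. unfold p'. apply Rmax_diff.
      + apply (proj2 Sp_inL); auto.
      + apply HrG; auto. }
  assert (Hp'P : P p').
  { split; auto. intros x Hx.
    destruct (Rle_dec (rh x) (Sp x)) as [Hle|Hgt].
    - unfold p' at 1. rewrite Rmax_left by lra. rewrite (Sp_fix x Hx).
      apply Phi_mono; auto. apply Sp_inL. intros t Ht. apply Rmax_l.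
    - assert (Hxf : f1 < x).
      { destruct (Rlt_dec f1 x); auto. exfalso. assert (H1 := F1 x ltac:(lra)).
        destruct (proj1 Sp_inL x Hx) as [S1 _]. lra. }
      unfold p' at 1. rewrite Rmax_right by lra.
      apply Phi_ge; auto. intros bb Hbb.
      set (dr := fun t => - lam t * om t * (b - K * (1 - t)) + om t * K).
      assert (Hrc : forall t, 0 < t < 1 -> continuity_pt (rho1 b K) t) by (intros; apply rho1_c; auto).
      assert (Hrn : forall t, 0 < t < 1 -> rho1 b K t <> 0).
      { intros t Ht. unfold rho1. assert (H := om_pos t). assert (0 < K * (1 - t)) by (apply Rmult_lt_0_compat; lra).
        assert (b - K * (1 - t) < 0) by (unfold b in *; lra).
        assert (om t * (b - K * (1 - t)) < 0) by nra. lra. }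
      assert (I1 : RInt (fun s => gam s (p' s)) x bb <= RInt (fun s => gam s (rho1 b K s)) x bb).
      { apply RInt_le; [lra| | |].
        - apply exRInt01; [intros; apply gp_c; auto| lra| lra].
        - apply exRInt01; [| lra| lra]. intros t Ht. apply gam_c; auto.
        - intros t Ht. apply gam_mono; [lra| |].
          + rewrite <- F2 by lra. unfold p'. apply Rmax_r.
          + apply (proj1 Hp'L); lra. }
      assert (I2 : RInt (fun s => gam s (rho1 b K s)) x bb <= RInt dr x bb).
      { apply RInt_le; [lra| | |].
        - apply exRInt01; [| lra| lra]. intros t Ht. apply gam_c; auto.
        - apply exRInt01; [| lra| lra]. intros t Ht. unfold dr.
          apply C_plus; [apply C_mult; [apply C_mult; [apply C_opp, lam_c| apply om_c]|]| apply C_mult; [apply om_c| apply C_const]]; auto.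
          apply C_minus; [apply C_const| apply C_mult; [apply C_const| apply C_minus; [apply C_const| apply C_id]]].
        - intros t Ht. assert (Ht' : 0 < t < 1) by lra. unfold dr, gam, rho1.
          assert (Ho := om_pos t). assert (0 < K * (1 - t)) by (apply Rmult_lt_0_compat; lra).
          set (eta := b - K * (1 - t)).
          assert (Heta : eta <= - eps / 4) by (unfold eta, b; lra).
          assert (E : om t * (h t - c) - q t * (om t * om t) / (om t * eta) - lam t * (om t * eta)
                      = om t * (h t - c + q t / (- eta)) - lam t * om t * eta) by (field; lra).
          rewrite E.
          assert (Hqt : q t <= Qb).
          { specialize (HQb t ltac:(lra)). apply Rabs_le_between in HQb. lra. }
          assert (Hht : h t <= HBh).
          { specialize (HHb t ltac:(lra)). apply Rabs_le_between in HHb. lra. }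
          assert (Hq0 : 0 < q t) by (apply qpos; auto).
          assert (Hqe : q t / (- eta) <= 4 * Qb / eps).
          { apply Rle_trans with (Qb / (- eta)).
            - unfold Rdiv. apply Rmult_le_compat_r; [| lra]. apply Rlt_le, Rinv_0_lt_compat; lra.
            - apply Rle_trans with (Qb / (eps / 4)).
              + unfold Rdiv. apply Rmult_le_compat_l; [lra|]. apply Rinv_le_contravar; lra.
              + right; field; lra. }
          pose proof (Rle_abs (- c)). rewrite Rabs_Ropp in H0.
          assert (h t - c + q t / - eta <= K) by (unfold R0 in HK; lra).
          assert (om t * (h t - c + q t / - eta) <= om t * K) by (apply Rmult_le_compat_l; lra).
          lra. }
      rewrite (FTC01 (rho1 b K) dr x bb) in I2; try lra.
      + assert (HA := F4 bb ltac:(lra)). rewrite F2 in HA by lra. rewrite F2 by lra. lra.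
      + intros t Ht. apply rho1_d; lra.
      + intros t Ht. unfold dr.
        apply C_plus; [apply C_mult; [apply C_mult; [apply C_opp, lam_c| apply om_c]|]| apply C_mult; [apply om_c| apply C_const]]; try lra.
        apply C_minus; [apply C_const| apply C_mult; [apply C_const| apply C_minus; [apply C_const| apply C_id]]]. }
  assert (Hx01 : 0 < x0 < 1) by (unfold f1 in *; lra).
  assert (Hle := proj1 (Sp_spec x0 Hx01) p' Hp'P).
  assert (Hrx : rh x0 <= Sp x0) by (eapply Rle_trans; [apply Rmax_r| apply Hle]).
  rewrite F2 in Hrx by (unfold f1; lra). unfold rho1, U in *.
  assert (Ho := om_pos x0).
  assert (Hux : Sp x0 <= - eps * om x0).
  { apply Rmult_le_compat_r with (r := om x0) in Hux0; [|lra].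
    replace (Sp x0 / om x0 * om x0) with (Sp x0) in Hux0 by (field; lra). lra. }
  assert (om x0 * (b - K * (1 - x0)) > - eps * om x0).
  { replace (- eps * om x0) with (om x0 * (- eps)) by ring. apply Rmult_lt_compat_l; auto. unfold b; lra. }
  lra.
Qed.

Lemma U_near1 eps : 0 < eps -> exists d, 0 < d /\ forall x, 1 - d < x < 1 -> - eps < U x.
Proof.
  intros He. destruct (U_near1_aux (Rmin eps 1)) as [d [Hd H]].
  { split; [apply Rmin_glb_lt; lra| apply Rmin_r]. }
  exists d; split; auto. intros x Hx. specialize (H x Hx). assert (Rmin eps 1 <= eps) by apply Rmin_l. lra.
Qed.


Definition Uf t := if Rle_dec t 0 then 0 else if Rle_dec 1 t then 0 else U t.

Lemma Uf_int t : 0 < t < 1 -> Uf t = U t.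
Proof. intros Ht. unfold Uf. destruct (Rle_dec t 0); [lra|]. destruct (Rle_dec 1 t); [lra|]. auto. Qed.

Lemma Uf_loc x : 0 < x < 1 -> locally x (fun t => U t = Uf t).
Proof.
  intros Hx. apply locally_interval with (a := Finite 0) (b := Finite 1); simpl; auto; try lra.
  intros y H1 H2. rewrite Uf_int; auto.
Qed.

Lemma Uf_d x : 0 < x < 1 -> is_derive Uf x (h x - c - q x / Uf x).
Proof.
  intros Hx. rewrite Uf_int by auto. apply (is_derive_ext_loc U Uf). apply Uf_loc; auto. apply U_d; auto.
Qed.

Lemma cpt_within (g : R -> R) (D : R -> Prop) x : continuity_pt g x -> filterlim g (within D (locally x)) (locally (g x)).
Proof.
  intros Hg. apply continuity_pt_filterlim in Hg. intros P HP. specialize (Hg P HP).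
  unfold filtermap, within in *. eapply filter_imp; [| exact Hg]. intros y Hy _; auto.
Qed.

Lemma Uf_cont : cont_on_01 Uf.
Proof.
  intros x Hx.
  destruct (Rle_lt_or_eq_dec 0 x (proj1 Hx)) as [H0|H0]; [destruct (Rle_lt_or_eq_dec x 1 (proj2 Hx)) as [H1|H1]|].
  - apply cpt_within. eapply deriv_cont. apply Uf_d; lra.
  - subst x. apply filterlim_locally. intros eps.
    destruct (U_near1 eps (cond_pos eps)) as [d [Hd Hd2]].
    exists (mkposreal d Hd). intros y Hy Hy2. apply ballR in Hy. simpl in Hy.
    change (Rabs (Uf y - Uf 1) < eps). unfold Uf at 2. destruct (Rle_dec 1 0); [lra|]. destruct (Rle_dec 1 1); [|lra].
    unfold Uf. destruct (Rle_dec y 0). rewrite Rminus_0_r, Rabs_R0; apply cond_pos.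
    destruct (Rle_dec 1 y). rewrite Rminus_0_r, Rabs_R0; apply cond_pos.
    apply Rabs_lt_between in Hy. specialize (Hd2 y ltac:(lra)).
    assert (U y < w y) by (apply U_bounds; lra). assert (w y < 0) by (apply wneg; lra).
    apply Rabs_lt_between. lra.
  - subst x. apply filterlim_locally. intros eps.
    destruct Hz as [Zc [_ [_ [_ Z0]]]].
    destruct (cont01_eps z 0 Zc ltac:(lra) eps (cond_pos eps)) as [d [Hd Hd2]].
    exists (mkposreal d Hd). intros y Hy Hy2. apply ballR in Hy. simpl in Hy.
    change (Rabs (Uf y - Uf 0) < eps). unfold Uf at 2. destruct (Rle_dec 0 0); [|lra].
    unfold Uf. destruct (Rle_dec y 0). rewrite Rminus_0_r, Rabs_R0; apply cond_pos.
    destruct (Rle_dec 1 y). rewrite Rminus_0_r, Rabs_R0; apply cond_pos.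
    specialize (Hd2 y Hy2 Hy). rewrite Z0, Rminus_0_r in Hd2. apply Rabs_lt_between in Hd2.
    assert (z y <= U y < w y) by (apply U_bounds; lra). assert (w y < 0) by (apply wneg; lra).
    apply Rabs_lt_between. lra.
Qed.

Lemma exists_P00 : exists V, sol_P00 h q c V.
Proof.
  exists Uf. split; [split; [apply Uf_cont| split; [| split; [| split]]]|].
  - intros x Hx. apply Uf_d; auto.
  - intros x Hx.
    apply (continuous_ext_loc (Derive Uf) (fun t => h t - c - q t / Uf t)).
    + apply locally_interval with (a := Finite 0) (b := Finite 1); simpl; auto; try lra.
      intros y H1 H2. symmetry. apply is_derive_unique. apply Uf_d; lra.
    + apply continuity_pt_filterlim.
      apply C_minus; [apply C_minus; [apply hc; auto| apply C_const]|].
      apply C_div; [apply qc; auto| |].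
      * eapply deriv_cont. apply Uf_d; auto.
      * rewrite Uf_int by auto. assert (U x < w x) by (apply U_bounds; auto). assert (w x < 0) by (apply wneg; auto). lra.
  - intros x Hx. rewrite Uf_int by auto. assert (U x < w x) by (apply U_bounds; auto). assert (w x < 0) by (apply wneg; auto). lra.
  - unfold Uf. destruct (Rle_dec 0 0); lra.
  - unfold Uf. destruct (Rle_dec 1 0); [lra|]. destruct (Rle_dec 1 1); lra.
Qed.

End Main.


Theorem proposition6p3 (f h q : R -> R) (cstar : R) :
  C1_01_with_deriv f h -> f 0 = 0 -> cond_q q ->
  (forall c, (exists z, sol_P00 h q c z) <-> cstar <= c) ->
  forall c, c < cstar -> ~ (exists z, sol_P h q c z).
Proof.
  intros Hf Hf0 Hq Hcs c Hc [z Hz].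
  destruct Hf as [_ Hh].
  destruct (proj2 (Hcs cstar) (Rle_refl _)) as [w Hw].
  assert (Hz1 : z 1 <= 0).
  { destruct (Rle_dec (z 1) 0) as [|Hn]; auto. exfalso.
    destruct Hz as [Zc [_ [_ [Zneg _]]]].
    destruct (cont01_eps z 1 Zc ltac:(lra) (z 1) ltac:(lra)) as [d [Hd Hd2]].
    set (y := Rmax (1/2) (1 - d/2)).
    assert (Hy1 : 1/2 <= y) by apply Rmax_l. assert (Hy2 : 1 - d/2 <= y) by apply Rmax_r.
    assert (Hy3 : y < 1) by (apply Rmax_lub_lt; lra).
    specialize (Hd2 y ltac:(lra) ltac:(apply Rabs_lt_between; lra)).
    apply Rabs_lt_between in Hd2. specialize (Zneg y ltac:(lra)). lra. }
  destruct (Rle_lt_or_eq_dec _ _ Hz1) as [Hlt|Heq].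
  - assert (Hzw := crossing h q z w c cstar Hq Hz Hw Hc Hlt).
    assert (Zc : cont_on_01 z) by (destruct Hz as [Zc _]; exact Zc).
    destruct (bounded01 z Zc) as [Zb HZb].
    destruct (bounded01 h Hh) as [HB HHb].
    destruct (bounded01 q (proj1 Hq)) as [Qb HQb].
    destruct (exists_P00 h q z w c cstar Zb HB Qb Hh Hq Hz Hw Hc Hzw HZb HHb HQb) as [V HV].
    assert (cstar <= c) by (apply (proj1 (Hcs c)); exists V; auto). lra.
  - assert (cstar <= c) by (apply (proj1 (Hcs c)); exists z; split; auto). lra.
Qed.
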